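(* Let $F$ be a field and let $G$ be a bipartite graph with bipartition $(X,Y)$, where $|X|=m$, $|Y|=n$ and $m\le n$. If $\mathcal{R}_F(G)\neq\emptyset$, then $$f(G\Box K_2)=m.$$
   Context: All graphs are finite and simple. For a graph $H$ with a perfect matching $M$, a subset $S\subseteq M$ is a forcing set of $M$ if $S$ is contained in no other perfect matching of $H$; $f(H,M)$ is the minimum size of a forcing set of $M$, and $f(H)$ is the minimum of $f(H,M)$ over all perfect matchings $M$ of $H$. For a bipartite graph $G$ with bipartition $(X,Y)$, a weighted bi-adjacency matrix of $G$ over $F$ is an $|X|\times|Y|$ matrix over $F$, rows indexed by $X$ and columns by $Y$, whose $(x,y)$ entry is nonzero iff $x$ and $y$ are adjacent. $\mathcal{R}_F(G)$ denotes the set of weighted bi-adjacency matrices $B$ of $G$ over $F$ (rows indexed by $X$, columns by $Y$) for which there is another weighted bi-adjacency matrix $C$ of $G$ over $F$ (rows indexed by $X$, columns by $Y$) with $BC^{\top}=I_m$; so $\mathcal{R}_F(G)\neq\emptyset$ means such a pair $B,C$ exists. $K_2$ is the complete graph on two vertices, and $G\Box H$ is the Cartesian product: vertex set $V(G)\times V(H)$, with $(g_1,h_1)\sim(g_2,h_2)$ iff either $g_1=g_2$ and $h_1h_2\in E(H)$, or $h_1=h_2$ and $g_1g_2\in E(G)$. *)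

(* Defs.v *)
From HB Require Import structures.
From mathcomp Require Import all_boot all_order all_algebra.
Set Implicit Arguments. Unset Strict Implicit. Unset Printing Implicit Defensive.
Import GRing.Theory.

(* Graphs are given by an adjacency relation [e : rel V] on a finite type V
   (for all graphs below it is symmetric and irreflexive: simple graphs). *)
Section Matchings.
Variable V : finType.
Variable e : rel V.

Definition is_edge (s : {set V}) : bool :=
  [exists u, exists v, [&& u != v, e u v & s == [set u; v]]].

Definition perfect_matching (M : {set {set V}}) : bool :=
  [forall s in M, is_edge s] && [forall v, #|[set s in M | v \in s]| == 1%N].

Definition forcing_set (M S : {set {set V}}) : bool :=
  (S \subset M) &&
  [forall M' : {set {set V}}, (perfect_matching M' && (S \subset M')) ==> (M' == M)].

Definition forcing_number_of (M : {set {set V}}) : nat :=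
  \big[minn/#|V|.+1]_(S : {set {set V}} | forcing_set M S) #|S|.

(* f(H): minimum of f(H, M) over all perfect matchings M of H
   (the default #|V|.+1 only matters if H has no perfect matching) *)
Definition forcing_number : nat :=
  \big[minn/#|V|.+1]_(M : {set {set V}} | perfect_matching M) forcing_number_of M.
End Matchings.

Definition cart_rel (A B : finType) (eA : rel A) (eB : rel B) : rel (A * B) :=
  fun p q => ((p.1 == q.1) && eB p.2 q.2) || ((p.2 == q.2) && eA p.1 q.1).

Definition K2_rel : rel bool := fun a b => a != b.

(* Bipartite graph with bipartition (X, Y), X = 'I_m, Y = 'I_n, given by its
   bi-adjacency relation; vertex set 'I_m + 'I_n *)
Definition bip_rel (m n : nat) (adj : 'I_m -> 'I_n -> bool) : rel ('I_m + 'I_n) :=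
  fun u v => match u, v with
             | inl x, inr y => adj x y
             | inr y, inl x => adj x y
             | _, _ => false
             end.

Definition weighted_biadj (F : fieldType) (m n : nat)
  (adj : 'I_m -> 'I_n -> bool) (B : 'M[F]_(m, n)) : Prop :=
  forall (i : 'I_m) (j : 'I_n), (B i j != 0%R) = adj i j.

Definition R_nonempty (F : fieldType) (m n : nat) (adj : 'I_m -> 'I_n -> bool) : Prop :=
  exists (B C : 'M[F]_(m, n)),
    [/\ weighted_biadj adj B, weighted_biadj adj C & B *m C^T = 1%:M]%R.

(* Main.v *)
Require Import Defs.
From HB Require Import structures.
From mathcomp Require Import all_boot all_order all_algebra all_fingroup.

Set Implicit Arguments. Unset Strict Implicit. Unset Printing Implicit Defensive.
Import GRing.Theory.


Section PM.
Variable V : finType.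
Variable e : rel V.
Hypothesis esym : symmetric e.
Hypothesis eirr : irreflexive e.

Lemma set2_eq (a b c d : V) : [set a; b] = [set c; d] -> a != b ->
  (a = c /\ b = d) \/ (a = d /\ b = c).
Proof.
move=> H ab.
have ha : a \in [set c; d] by rewrite -H set21.
have hb : b \in [set c; d] by rewrite -H set22.
have hc : c \in [set a; b] by rewrite H set21.
have hd : d \in [set a; b] by rewrite H set22.
case/set2P: ha => ea; case/set2P: hb => eb; subst.
- by rewrite eqxx in ab.
- by left.
- by right.
- by rewrite eqxx in ab.
Qed.

Lemma pm_unique M v s t : perfect_matching e M -> s \in M -> t \in M ->
  v \in s -> v \in t -> s = t.
Proof.
case/andP=> _ /forallP /(_ v) /cards1P [x Hx] sM tM vs vt.
have : s \in [set s in M | v \in s] by rewrite inE sM vs.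
have : t \in [set s in M | v \in s] by rewrite inE tM vt.
by rewrite Hx !inE => /eqP -> /eqP ->.
Qed.

Lemma pm_edge M s : perfect_matching e M -> s \in M ->
  exists u v, [/\ u != v, e u v & s = [set u; v]].
Proof.
case/andP=> /forallP H _ sM; have := H s; rewrite sM /=.
case/existsP=> u /existsP [v /and3P [uv euv /eqP ->]]; by exists u, v.
Qed.

Lemma pm_cover M v : perfect_matching e M -> exists2 s, s \in M & v \in s.
Proof.
case/andP=> _ /forallP /(_ v) /cards1P [x Hx].
have : x \in [set s in M | v \in s] by rewrite Hx set11.
by rewrite inE => /andP [xM vx]; exists x.
Qed.

Definition mate (M : {set {set V}}) (v : V) : V := odflt v [pick u | ([set v; u] \in M) && (u != v)].

Lemma mateP M v : perfect_matching e M -> ([set v; mate M v] \in M) && (mate M v != v).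
Proof.
move=> pm; rewrite /mate; case: pickP => [u //|H].
case: (pm_cover v pm) => s sM vs.
case: (pm_edge pm sM) => a [b [ab _ Es]]; subst s.
case/set2P: vs => ev; subst v.
- by have := H b; rewrite sM eq_sym ab.
- by have := H a; rewrite setUC sM ab.
Qed.

Lemma mate_uniq M v s : perfect_matching e M -> s \in M -> v \in s ->
  s = [set v; mate M v].
Proof.
move=> pm sM vs; case/andP: (mateP v pm) => mM _.
exact: (pm_unique pm sM mM vs (set21 _ _)).
Qed.

Lemma mate_neq M v : perfect_matching e M -> mate M v != v.
Proof. by move=> pm; case/andP: (mateP v pm). Qed.

Lemma mate_in M v : perfect_matching e M -> [set v; mate M v] \in M.
Proof. by move=> pm; case/andP: (mateP v pm). Qed.

Lemma mate_edge M v : perfect_matching e M -> e v (mate M v).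
Proof.
move=> pm; case/andP: (mateP v pm) => mM nv.
case: (pm_edge pm mM) => a [b [ab eab Es]].
have := set2_eq Es; rewrite eq_sym => /(_ nv) [[-> ->]|[-> ->]] //.
by rewrite esym.
Qed.

Lemma mateK M v : perfect_matching e M -> mate M (mate M v) = v.
Proof.
move=> pm.
have E := pm_unique pm (mate_in v pm) (mate_in (mate M v) pm) (set22 _ _) (set21 _ _).
have : mate M (mate M v) \in [set v; mate M v] by rewrite E set22.
case/set2P => // h; by have := mate_neq (mate M v) pm; rewrite h eqxx.
Qed.

Lemma pm_of_inv (p : V -> V) : (forall v, e v (p v)) -> (forall v, p (p v) = v) ->
  perfect_matching e [set [set v; p v] | v : V].
Proof.
move=> ep pp; apply/andP; split.
  apply/forallP => s; apply/implyP => /imsetP [v _ ->].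
  apply/existsP; exists v; apply/existsP; exists (p v); apply/and3P; split => //.
  by apply/eqP => h; have := eirr v; rewrite {2}h ep.
apply/forallP => u; apply/cards1P; exists [set u; p u]; apply/setP => s.
rewrite !inE; apply/idP/idP.
  case/andP=> /imsetP [v _ ->] /set2P [->|->]; first by [].
  by rewrite pp setUC.
by move/eqP ->; rewrite set21 andbT; apply/imsetP; exists u.
Qed.

Lemma pm_sub_eq M M' : perfect_matching e M -> perfect_matching e M' ->
  M \subset M' -> M = M'.
Proof.
move=> pm pm' sub; apply/eqP; rewrite eqEsubset sub /=; apply/subsetP => s sM'.
case: (pm_edge pm' sM') => u [v [_ _ Es]].
have tM := mate_in u pm.
have := pm_unique pm' sM' (subsetP sub _ tM) (_ : u \in s) (set21 _ _).
by rewrite Es set21 => /(_ isT) ->.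
Qed.

End PM.


Section G.
Variable m n : nat.
Variable adj : 'I_m -> 'I_n -> bool.
Local Notation V := (('I_m + 'I_n) * bool)%type.
Local Notation e := (cart_rel (bip_rel adj) K2_rel).

Lemma e_sym : symmetric e.
Proof.
move=> [u b] [v c]; rewrite /cart_rel /K2_rel /= [c == b]eq_sym [v == u]eq_sym; case: b c => [] [] /=;
by case: u v => [x|y] [x'|y'].
Qed.

Definition color (v : V) : bool := match v.1 with inl _ => v.2 | inr _ => ~~ v.2 end.

Lemma e_color u v : e u v -> color v = ~~ color u.
Proof.
case: u v => [[x|y] b] [[x'|y'] c]; rewrite /cart_rel /K2_rel /color /=;
  case: b c => [] [] //=; rewrite ?andbF ?orbF ?andbT //.
Qed.

Lemma e_irr : irreflexive e.
Proof. by move=> v; apply/negP => /e_color; case: (color v). Qed.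

Definition vrow (i : 'I_(m + n)) : V :=
  match split i with inl x => (inl x, false) | inr y => (inr y, true) end.
Definition rowinv (v : V) : 'I_(m + n) :=
  match v.1 with inl x => lshift n x | inr y => rshift m y end.

Lemma vrowK i : rowinv (vrow i) = i.
Proof. by rewrite /vrow /rowinv; case: splitP => j /= ij; apply/val_inj; rewrite /= ij. Qed.

Lemma rowinvK v : color v = false -> vrow (rowinv v) = v.
Proof.
case: v => [[x|y] b]; rewrite /color /rowinv /vrow /= => hb.
  by have := unsplitK (inl x : 'I_m + 'I_n); rewrite /= => ->; rewrite hb.
by have := unsplitK (inr y : 'I_m + 'I_n); rewrite /= => ->; move/negbFE: hb => ->.
Qed.

Lemma color_vrow i : color (vrow i) = false.
Proof. by rewrite /vrow; case: (split i). Qed.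

Lemma vrow_inj : injective vrow.
Proof. by move=> i j h; rewrite -(vrowK i) -(vrowK j) h. Qed.

End G.


Section U.
Variable m n : nat.
Variable adj : 'I_m -> 'I_n -> bool.
Local Notation V := (('I_m + 'I_n) * bool)%type.
Local Notation e := (cart_rel (bip_rel adj) K2_rel).

Definition p0 (v : V) : V := (v.1, ~~ v.2).
Definition M0 := [set [set v; p0 v] | v : V].
Definition S0 := [set [set ((inl x : 'I_m + 'I_n), false); (inl x, true)] | x : 'I_m].

Lemma M0_pm : perfect_matching e M0.
Proof.
apply: pm_of_inv; first exact: e_irr.
  by move=> [u b]; rewrite /cart_rel /p0 /K2_rel /= eqxx; case: b.
by move=> [u b]; rewrite /p0 /= negbK.
Qed.

Lemma S0_card : #|S0| = m.
Proof.
rewrite card_imset ?card_ord // => x y h.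
have : ((inl x : 'I_m + 'I_n), false) \in [set ((inl y : 'I_m + 'I_n), false); (inl y, true)].
  by rewrite -h set21.
by case/set2P => [[]|[]].
Qed.

Lemma S0_sub : S0 \subset M0.
Proof.
apply/subsetP => s /imsetP [x _ ->]; apply/imsetP; exists ((inl x : 'I_m + 'I_n), false) => //.
Qed.

Lemma S0_forcing : forcing_set e M0 S0.
Proof.
rewrite /forcing_set S0_sub /=; apply/forallP => M'; apply/implyP => /andP [pm sub].
have mX : forall x b, mate M' ((inl x : 'I_m + 'I_n), b) = (inl x, ~~ b).
  move=> x b.
  have tS : [set ((inl x : 'I_m + 'I_n), false); (inl x, true)] \in M'.
    by apply: (subsetP sub); apply/imsetP; exists x.
  have vt : ((inl x : 'I_m + 'I_n), b) \in [set ((inl x : 'I_m + 'I_n), false); (inl x, true)].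
    by case: b; rewrite !inE eqxx ?orbT.
  have E := mate_uniq pm tS vt.
  have : mate M' (inl x, b) \in [set ((inl x : 'I_m + 'I_n), false); (inl x, true)].
    by rewrite E set22.
  have nb := mate_neq (inl x, b) pm.
  clear E vt; case/set2P => h; rewrite h in nb *; clear h; case: b nb; rewrite ?eqxx //.
have mall : forall v, mate M' v = p0 v.
  move=> [[x0|y] b]; first by rewrite mX.
  have := mate_edge (@e_sym _ _ adj) (inr y, b) pm.
  case E: (mate M' (inr y, b)) => [[x|y'] c]; rewrite /cart_rel /K2_rel /=.
    case/andP => /eqP bc axy; subst c.
    by have h1 := mateK (inr y, b) pm; rewrite E mX in h1.
  rewrite andbF orbF => /andP [/eqP [->] bc].
  by rewrite /p0 /=; clear E; move: bc; case: b; case: c.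
apply/eqP/esym; apply: (pm_sub_eq M0_pm pm).
apply/subsetP => s /imsetP [v _ ->]; rewrite -mall; exact: (mate_in v pm).
Qed.

End U.


Section L.
Local Open Scope ring_scope.
Variable F : fieldType.
Variable m n : nat.
Variable adj : 'I_m -> 'I_n -> bool.
Variables B C : 'M[F]_(m, n).
Hypothesis hB : weighted_biadj adj B.
Hypothesis hC : weighted_biadj adj C.
Hypothesis hBC : B *m C^T = 1%:M.
Local Notation V := (('I_m + 'I_n) * bool)%type.
Local Notation e := (cart_rel (bip_rel adj) K2_rel).

Definition Pw (u : V) (t : 'I_n) : F :=
  match u.1 with inl x => B x t | inr y => (y == t)%:R end.
Definition Qw (t : 'I_n) (v : V) : F :=
  match v.1 with inl x => C x t | inr y => (t == y)%:R end.
Definition w (u v : V) : F := \sum_t Pw u t * Qw t v.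

Lemma sum_delta_r (G : 'I_n -> F) y : \sum_t G t * (t == y)%:R = G y.
Proof.
rewrite (bigD1 y) //= eqxx mulr1 big1 ?addr0 // => t /negbTE ->; exact: mulr0.
Qed.

Lemma sum_delta_l (G : 'I_n -> F) y : \sum_t (y == t)%:R * G t = G y.
Proof.
rewrite (bigD1 y) //= eqxx mul1r big1 ?addr0 // => t; rewrite eq_sym => /negbTE ->; exact: mul0r.
Qed.

Lemma w_edge u v : color u = false -> color v = true -> (w u v != 0) = e u v.
Proof.
case: u v => [[x|y] []] [[x'|y'] []] //=;
  rewrite /w /Pw /Qw /cart_rel /K2_rel /= => _ _.
- have := congr1 (fun M : 'M[F]_m => M x x') hBC.
  rewrite !mxE => h.
  have -> : \sum_t B x t * C x' t = (x == x')%:R.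
    by rewrite -h; apply: eq_bigr => t _; rewrite mxE.
  rewrite andbT orbF; case: (x =P x') => [->|nx]; first by rewrite eqxx oner_eq0.
  by rewrite mulr0n eqxx; apply/esym/negbTE; apply/negP => /eqP [] /nx.
- by rewrite sum_delta_r hB.
- by rewrite sum_delta_l hC.
- rewrite sum_delta_l andbT orbF; case: (y =P y') => [->|ny]; first by rewrite eqxx oner_eq0.
  by rewrite mulr0n eqxx; apply/esym/negbTE; apply/negP => /eqP [] /ny.
Qed.

Lemma rank_addle (A1 A2 : 'M[F]_(m + n)) : (\rank (A1 + A2)%R <= \rank A1 + \rank A2)%N.
Proof.
have h1 := mxrankS (addmx_sub_adds (submx_refl A1) (submx_refl A2)).
have h2 := (mxrank_adds_leqif A1 A2).1.
exact: leq_trans h1 h2.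
Qed.

Lemma lower M S : perfect_matching e M -> forcing_set e M S -> (m <= #|S|)%N.
Proof.
move=> pm /andP [sSM /forallP fS].
have esym := @e_sym m n adj.
pose mt := mate M.
have mtK v : mt (mt v) = v := mateK v pm.
have mte v : e v (mt v) := mate_edge esym v pm.
have mtc v : color (mt v) = ~~ color v := e_color (mte v).
pose cov (j : 'I_(m + n)) := [set vrow j; mt (vrow j)] \in S.
pose N := \matrix_(i, j) (if cov j then (i == j)%:R else w (vrow i) (mt (vrow j))) : 'M[F]_(m + n).
have detN : \det N != 0.
  rewrite /determinant (bigD1 1%g) //= [X in _ + X]big1 ?addr0.
    rewrite odd_perm1 expr0 mul1r; apply/prodf_neq0 => i _; rewrite perm1 mxE.
    case: ifP => _; first by rewrite eqxx oner_eq0.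
    by rewrite w_edge ?color_vrow ?mtc ?color_vrow.
  move=> s hs; apply/eqP; rewrite mulf_eq0; apply/orP; right.
  apply/negPn/negP => /prodf_neq0 nz.
  have fix_cov : forall j, cov j -> s j = j.
    move=> j cj; have := nz ((s^-1)%g j) isT; rewrite mxE permKV cj.
    case: ((s^-1)%g j =P j) => [h _|_]; last by rewrite /= mulr0n eqxx.
    by rewrite -{1}h permKV.
  have edge_s : forall i, e (vrow i) (mt (vrow (s i))).
    move=> i; case cv: (cov (s i)).
      have h := fix_cov _ cv; have -> : s i = i by apply: (perm_inj h).
      exact: mte.
    by have := nz i isT; rewrite mxE cv w_edge ?color_vrow ?mtc ?color_vrow.
  pose p := fun v : V => if color v then vrow ((s^-1)%g (rowinv (mt v)))
                         else mt (vrow (s (rowinv v))).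
  have pp : forall v, p (p v) = v.
    move=> v; rewrite /p; case cv: (color v).
      by rewrite color_vrow vrowK permKV rowinvK ?mtK // mtc cv.
    by rewrite mtc color_vrow /= mtK vrowK permK rowinvK.
  have ep : forall v, e v (p v).
    move=> v; rewrite /p; case cv: (color v).
      set i := (s^-1)%g (rowinv (mt v)).
      have hv : mt (vrow (s i)) = v by rewrite /i permKV rowinvK ?mtK // mtc cv.
      by rewrite -{1}hv esym; apply: edge_s.
    by rewrite -{1}(rowinvK cv); apply: edge_s.
  have pmM := pm_of_inv (@e_irr m n adj) ep pp.
  have subS : S \subset [set [set v; p v] | v : V].
    apply/subsetP => t tS; have tM := subsetP sSM _ tS.
    case: (pm_edge pm tM) => a [b [_ eab Et]].
    have [r [rt cr]] : exists r, r \in t /\ color r = false.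
      case ca: (color a).
        by exists b; rewrite Et set22 (e_color eab) ca.
      by exists a; rewrite Et set21 ca.
    have Er := mate_uniq pm tM rt.
    apply/imsetP; exists r => //; rewrite Er /p cr.
    have cj : cov (rowinv r) by rewrite /cov rowinvK // -Er.
    by rewrite fix_cov // rowinvK.
  have := fS [set [set v; p v] | v : V]; rewrite pmM subS /= => /eqP EM.
  move/eqP: hs; apply; apply/permP => i; rewrite perm1.
  have : [set vrow i; p (vrow i)] \in M by rewrite -EM; apply/imsetP; exists (vrow i).
  move/(mate_uniq pm)/(_ (set21 _ _)) => E.
  have : p (vrow i) \in [set vrow i; mt (vrow i)] by rewrite -E set22.
  rewrite /p color_vrow vrowK => /set2P [h|h].
    by have := congr1 (@color m n) h; rewrite mtc !color_vrow.
  by apply: vrow_inj; rewrite -[vrow (s i)]mtK h mtK.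
have rankN : (\rank N <= n + #|S|)%N.
  pose P' := \matrix_(i, t) Pw (vrow i) t : 'M[F]_(m + n, n).
  pose Q' := \matrix_(t, j) (if cov j then 0 else Qw t (mt (vrow j))) : 'M[F]_(n, m + n).
  pose D := \sum_(j | cov j) delta_mx j j : 'M[F]_(m + n).
  have -> : N = (P' *m Q' + D)%R.
    apply/matrixP => i j; rewrite !mxE summxE.
    under [in RHS]eq_bigr do rewrite !mxE.
    under [X in _ = _ + X]eq_bigr do rewrite !mxE.
    case cj: (cov j).
      rewrite big1 ?add0r => [|k _]; last exact: mulr0.
      rewrite (bigD1 j) //= eqxx andbT big1 ?addr0 // => k /andP [_ kj].
      by rewrite [j == k]eq_sym (negbTE kj) andbF.
    rewrite /w [X in _ + X]big1 ?addr0 // => k ck.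
    have /negbTE -> : j != k by apply/eqP => jk; rewrite jk ck in cj.
    by rewrite andbF.
  apply: leq_trans (rank_addle _ _) _; apply: leq_add.
    exact: leq_trans (mxrankM_maxl _ _) (rank_leq_col _).
  have hD : (\rank D <= \sum_(j | cov j) 1)%N.
    rewrite /D; apply: (big_ind2 (fun (A : 'M[F]_(m + n)) k => \rank A <= k)%N).
    - by rewrite mxrank0.
    - move=> A1 k1 A2 k2 h1 h2; apply: leq_trans (rank_addle _ _) _; exact: leq_add.
    - by move=> j _; rewrite mxrank_delta.
  apply: leq_trans hD _; rewrite sum1dep_card.
  have <- : #|[set [set vrow j; mt (vrow j)] | j in [set j | cov j]]| = #|[set j | cov j]|.
    apply: card_in_imset => j1 j2 _ _ E.
    have : vrow j1 \in [set vrow j2; mt (vrow j2)] by rewrite -E set21.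
    case/set2P => [/vrow_inj //|h].
    by have := congr1 (@color m n) h; rewrite mtc !color_vrow.
  apply: subset_leq_card; apply/subsetP => t /imsetP [j]; rewrite inE => cj ->; exact: cj.
have := mxrank_unit (_ : N \in unitmx); rewrite unitmxE unitfE detN => /(_ isT) h.
by move: rankN; rewrite h addnC leq_add2l.
Qed.
End L.

Unset Implicit Arguments.


Lemma bigmin_le (I : finType) (P : pred I) (F : I -> nat) x i0 :
  P i0 -> \big[minn/x]_(i | P i) F i <= F i0.
Proof.
move=> Pi0; rewrite unlock.
have : i0 \in index_enum I by rewrite mem_index_enum.
elim: (index_enum I) => //= a r IH; rewrite inE => /orP [/eqP <-|ir].
  by rewrite Pi0 geq_minl.
case: (P a); last exact: IH.
exact: leq_trans (geq_minr _ _) (IH ir).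
Qed.

Theorem theorem3p1 (F : fieldType) (m n : nat) (adj : 'I_m -> 'I_n -> bool) :
  (m <= n)%N -> R_nonempty F adj ->
  forcing_number (cart_rel (bip_rel adj) K2_rel) = m.
Proof.
move=> _ [B [C [hB hC hBC]]].
apply/eqP; rewrite eqn_leq; apply/andP; split.
  rewrite /forcing_number; apply: leq_trans (bigmin_le _ _ _ _ _ (M0_pm adj)) _.
  rewrite /forcing_number_of; apply: leq_trans (bigmin_le _ _ _ _ _ (S0_forcing adj)) _; by rewrite S0_card.
have hV : m <= #|{: ('I_m + 'I_n) * bool}|.+1.
  by rewrite card_prod card_sum !card_ord card_bool; apply: leqW; rewrite muln2 -addnn -addnA leq_addr.
rewrite /forcing_number; apply: (big_ind (fun k => m <= k)) => //; first by move=> x y hx hy; rewrite leq_min hx.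
move=> M pm; rewrite /forcing_number; apply: (big_ind (fun k => m <= k)) => //; first by move=> x y hx hy; rewrite leq_min hx.
move=> S fS; exact: (lower hB hC hBC pm fS).
Qed.
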